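(* Let $\Sigma$ be an infinite alphabet and $k\ge1$. Every RCP function $f\colon(\Sigma^* )^k\to\Sigma^*$ is of the form $$f(x_1,\ldots,x_k)=w_0\,x_{i_1}^{p_1}\,w_1\,x_{i_2}^{p_2}\,w_2\cdots x_{i_n}^{p_n}\,w_n\quad\text{for all }x_1,\ldots,x_k\in\Sigma^*,$$ for some $n\in\mathbb{N}$, words $w_0,\ldots,w_n\in\Sigma^*$, exponents $p_1,\ldots,p_n\in\mathbb{N}$ and indices $i_1,\ldots,i_n\in\{1,\ldots,k\}$.
   Context: $\Sigma^*$ is the free monoid over $\Sigma$ (finite words, concatenation, empty word $\varepsilon$); $x^p$ denotes the concatenation of $p$ copies of $x$. A function $f\colon(\Sigma^* )^k\to\Sigma^*$ is RCP if for every monoid morphism $\varphi\colon\Sigma^*\to\Sigma^*$ and all $u_1,\ldots,u_k,v_1,\ldots,v_k$ with $\varphi(u_i)=\varphi(v_i)$ for all $i$, we have $\varphi(f(u_1,\ldots,u_k))=\varphi(f(v_1,\ldots,v_k))$. *)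

(* Defs.v *)
From mathcomp Require Import all_boot.
Set Implicit Arguments. Unset Strict Implicit. Unset Printing Implicit Defensive.

Definition infinite_alphabet (T : eqType) : Prop :=
  forall s : seq T, exists x : T, x \notin s.

Definition monoid_morphism (T : Type) (phi : seq T -> seq T) : Prop :=
  phi [::] = [::] /\ forall u v : seq T, phi (u ++ v) = phi u ++ phi v.

Definition wpow (T : Type) (x : seq T) (p : nat) : seq T := flatten (nseq p x).

Definition RCP (T : Type) (k : nat) (f : k.-tuple (seq T) -> seq T) : Prop :=
  forall (phi : seq T -> seq T) (u v : k.-tuple (seq T)),
    monoid_morphism phi ->
    (forall i : 'I_k, phi (tnth u i) = phi (tnth v i)) ->
    phi (f u) = phi (f v).

(* Main.v *)
Require Import Defs.
From mathcomp Require Import all_boot.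

Set Implicit Arguments. Unset Strict Implicit.
Section Aux.
Variable T : eqType.

Definition sub (c : seq T) (x : seq (seq T)) (w : seq T) : seq T :=
  flatten [seq if a \in c then nth [::] x (index a c) else [:: a] | a <- w].

Lemma sub_cat c x u v : sub c x (u ++ v) = sub c x u ++ sub c x v.
Proof. by rewrite /sub map_cat flatten_cat. Qed.

Lemma sub_cons c x a w :
  sub c x (a :: w) = (if a \in c then nth [::] x (index a c) else [:: a]) ++ sub c x w.
Proof. by []. Qed.

Lemma sub_id c x w : (forall a, a \in w -> a \notin c) -> sub c x w = w.
Proof.
elim: w => [//|a w IH] H; rewrite sub_cons IH.
  by rewrite (negbTE (H a (mem_head _ _))).
by move=> b Hb; apply: H; rewrite in_cons Hb orbT.
Qed.

Lemma flatten_single (s : seq T) : flatten [seq [:: a] | a <- s] = s.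
Proof. by elim: s => //= a s ->. Qed.

Lemma mem_sub c x w a : a \in w -> a \notin c -> a \in sub c x w.
Proof.
elim: w => [//|b w IH]; rewrite in_cons sub_cons mem_cat => /orP [/eqP <-|Hw] Hc.
  by rewrite (negbTE Hc) mem_head.
by rewrite IH ?orbT.
Qed.

Lemma sub_comp c d x W : uniq c -> size c = size d ->
  (forall a, a \in W -> a \notin d -> a \notin c) ->
  sub c x (sub d [seq [:: a] | a <- c] W) = sub d x W.
Proof.
move=> Uc Sz; elim: W => [//|a W IH] H.
rewrite !sub_cons sub_cat IH; last first.
  by move=> b Hb; apply: H; rewrite in_cons Hb orbT.
congr (_ ++ _).
case: ifP => Ha.
  have Hi : index a d < size c by rewrite Sz index_mem.
  rewrite (nth_map a) // sub_cons mem_nth // index_uniq // cats0 //.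
rewrite sub_cons cats0.
have Hc := H a (mem_head _ _) (negbT Ha).
by rewrite (negbTE Hc).
Qed.

Lemma fresh_tuple (Hinf : infinite_alphabet T) (s : seq T) n :
  exists c : n.-tuple T, uniq c /\ forall a, a \in c -> a \notin s.
Proof.
elim: n => [|n [c [Uc Fc]]].
  by exists [tuple]; split.
have [x Hx] := Hinf (c ++ s).
rewrite mem_cat negb_or in Hx; case/andP: Hx => Hxc Hxs.
exists [tuple of x :: c]; split => /=.
  by rewrite Hxc Uc.
by move=> a; rewrite in_cons => /orP [/eqP ->|/Fc].
Qed.

Lemma repr k (c : k.-tuple T) W :
  exists (w0 : seq T) (l : seq ('I_k * nat * seq T)),
    forall x : k.-tuple (seq T),
      sub c x W = w0 ++ flatten [seq wpow (tnth x t.1.1) t.1.2 ++ t.2 | t <- l].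
Proof.
elim: W => [|a W [w0 [l IH]]].
  by exists [::], [::].
case Ha: (a \in c).
  have Hi : index a c < k by rewrite -{2}(size_tuple c) index_mem.
  exists [::], ((Ordinal Hi, 1, w0) :: l) => x.
  rewrite sub_cons Ha IH /= /wpow /= cats0 (tnth_nth [::]) /= catA //.
exists (a :: w0), l => x.
by rewrite sub_cons Ha IH.
Qed.

Lemma key k (f : k.-tuple (seq T) -> seq T) (Hf : RCP f)
  (d : k.-tuple T) (x : k.-tuple (seq T)) :
  uniq d -> (forall a, a \in d -> a \notin flatten x ++ f x) ->
  f x = sub d x (f (map_tuple (fun a => [:: a]) d)).
Proof.
move=> Ud Fd.
have Hid : forall w, (forall a, a \in w -> a \in flatten x ++ f x) -> sub d x w = w.
  move=> w Hw; apply: sub_id => a Ha; apply/negP => Had.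
  by have := Fd a Had; rewrite Hw.
have Hm : Defs.monoid_morphism (sub d x) by split => //; apply: sub_cat.
rewrite -{1}(Hid (f x)); last by move=> a Ha; rewrite mem_cat Ha orbT.
apply: esym; apply: Hf => // i.
rewrite tnth_map (Hid (tnth x i)); last by move=> a Ha; rewrite mem_cat; apply/orP; left; apply/flattenP; exists (tnth x i); [exact: mem_tnth | exact: Ha].
rewrite sub_cons mem_tnth cats0 (tnth_nth (tnth d i) d) index_uniq ?size_tuple //.
by rewrite (tnth_nth [::]).
Qed.

End Aux.
Unset Implicit Arguments.

Theorem mainTheorem20 (T : eqType) (k : nat) (f : k.-tuple (seq T) -> seq T) :
  infinite_alphabet T -> 0 < k -> RCP f ->
  exists (w0 : seq T) (l : seq ('I_k * nat * seq T)),
    forall x : k.-tuple (seq T),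
      f x = w0 ++ flatten [seq wpow (tnth x t.1.1) t.1.2 ++ t.2 | t <- l].
Proof.
move=> Hinf _ Hf.
set e := nseq_tuple k ([::] : seq T).
have [c [Uc Fc]] := fresh_tuple Hinf (f e) k.
set c' := map_tuple (fun a => [:: a]) c.
have [w0 [l Hl]] := repr c (f c').
exists w0, l => x; rewrite -Hl.
have [d [Ud Fd]] := fresh_tuple Hinf (flatten x ++ f x ++ c ++ f c' ++ f e) k.
set W := f (map_tuple (fun a => [:: a]) d).
have H1 : f x = sub d x W.
  apply: key => // a /Fd; rewrite !mem_cat !negb_or.
  by case/and5P => -> -> _ _ _.
have H2 : f c' = sub d c' W.
  apply: key => // a /Fd; rewrite !mem_cat !negb_or /= flatten_single.
  by case/and5P => _ _ -> -> _.
have H3 : f e = sub d e W.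
  apply: key => // a /Fd; rewrite !mem_cat !negb_or.
  case/and5P => _ _ _ _ ->; rewrite andbT /e /=.
  by elim: (k) => //.
rewrite H2 H1 /= sub_comp ?size_tuple // => a Ha Hd.
apply/negP => /Fc; rewrite H3.
by rewrite mem_sub.
Qed.
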